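(* Let $f\colon2^{\mathcal N}\to\mathbb R_{\ge0}$ be a non-negative submodular function, $\mathbf p$ a positive price vector over $\mathcal N$, $s\in\mathcal N$ and $\gamma\in(0,1)$. Let $\mathcal N^*=(\mathcal N\setminus\{s\})\cup\{\sigma_1,\sigma_2\}$ with new elements $\sigma_1,\sigma_2$, and define $f^*\colon2^{\mathcal N^*}\to\mathbb R_{\ge0}$ by $$f^*(S)=f(\widehat S)+\gamma\,\big(f(\widehat S\cup\{s\})-f(\widehat S)\big)\,\mathbb I[\sigma_1\in S]+(1-\gamma)\,\big(f(\widehat S\cup\{s\})-f(\widehat S)\big)\,\mathbb I[\sigma_2\in S],$$ where $\widehat S=S\setminus\{\sigma_1,\sigma_2\}$ and $\mathbb I[\cdot]$ is the indicator. Then $f^*$ is submodular.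
   Context: $f$ is submodular if $f(S\cup\{u\})-f(S)\ge f(T\cup\{u\})-f(T)$ for all $S\subseteq T$ and $u\notin T$. (The construction of $f^*$, together with prices $p^*_{\sigma_1}=\gamma p_s$, $p^*_{\sigma_2}=(1-\gamma)p_s$ and $p^*_x=p_x$ otherwise, is called a $\gamma$-split of $s$.) *)

(* Defs.v *)
From mathcomp Require Import all_boot all_order all_algebra.
Set Implicit Arguments. Unset Strict Implicit. Unset Printing Implicit Defensive.
Import Order.TTheory GRing.Theory Num.Theory.
Local Open Scope ring_scope.

Definition submodular (R : numDomainType) (T : finType) (f : {set T} -> R) : Prop :=
  forall (S U : {set T}) (u : T), S \subset U -> u \notin U ->
    f (U :|: [set u]) - f U <= f (S :|: [set u]) - f S.

(* Ground set N* = (N \ {s}) + {sigma1, sigma2}: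
   inl x for x in N with x <> s, inr false = sigma1, inr true = sigma2. *)
Definition split_ground (N : finType) (s : N) : finType :=
  ({x : N | x != s} + bool)%type.

Definition sigma1 (N : finType) (s : N) : split_ground s := inr false.
Definition sigma2 (N : finType) (s : N) : split_ground s := inr true.

(* hat S = S \ {sigma1, sigma2}, viewed as a subset of N. *)
Definition hat (N : finType) (s : N) (S : {set split_ground s}) : {set N} :=
  [set x : N | if @insub N (fun y => y != s) _ x is Some y
               then (inl y : split_ground s) \in S else false].

Definition fstar (R : numDomainType) (N : finType) (f : {set N} -> R) (s : N)
    (gamma : R) (S : {set split_ground s}) : R :=
  let H := hat S in
  let marg := f (H :|: [set s]) - f H in
  f H + gamma * marg * (sigma1 s \in S)%:R
      + (1 - gamma) * marg * (sigma2 s \in S)%:R.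

(* Main.v *)
Require Import Defs.
From mathcomp Require Import all_boot all_order all_algebra.
From mathcomp Require Import ring lra.
Import Order.TTheory GRing.Theory Num.Theory.
Local Open Scope ring_scope.

Section Aux.
Set Implicit Arguments.
Variables (N : finType) (s : N).
Local Notation G := (split_ground s).
Local Notation sub := {x : N | x != s}.

Lemma mem_hat_val (S : {set G}) (z : sub) : (val z \in hat S) = (inl z \in S).
Proof. by rewrite inE valK. Qed.

Lemma s_notin_hat (S : {set G}) : (s \in hat S) = false.
Proof. by rewrite inE insubF ?eqxx. Qed.

Lemma hat_ext (A B : {set G}) (X Y : {set N}) :
  s \notin X -> s \notin Y ->
  (forall z : sub, (inl z \in A) = (val z \in X)) ->
  (forall z : sub, (inl z \in B) = (val z \in Y)) ->
  (forall z : sub, (val z \in X) = (val z \in Y)) ->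
  True.
Proof. by []. Qed.

Lemma hat_eq (A : {set G}) (X : {set N}) :
  s \notin X -> (forall z : sub, (inl z \in A) = (val z \in X)) -> hat A = X.
Proof.
move=> sX h; apply/setP => y; case: (eqVneq y s) => [->|ny].
  by rewrite s_notin_hat (negbTE sX).
have -> : y = val (Sub y ny : sub) by [].
by rewrite mem_hat_val h.
Qed.

Lemma hat_inl (U : {set G}) (x : sub) :
  hat (U :|: [set inl x]) = hat U :|: [set val x].
Proof.
apply: hat_eq.
  rewrite in_setU in_set1 s_notin_hat /=; by rewrite eq_sym (negbTE (valP x)).
by move=> z; rewrite in_setU in_set1 mem_hat_val in_setU in_set1.
Qed.

Lemma hat_inr (U : {set G}) (b : bool) :
  hat (U :|: [set inr b]) = hat U.
Proof.
apply: hat_eq; first by rewrite s_notin_hat.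
by move=> z; rewrite in_setU in_set1 mem_hat_val orbF.
Qed.

Lemma hat_sub (S U : {set G}) : S \subset U -> hat S \subset hat U.
Proof.
move=> SU; apply/subsetP => y; rewrite !inE.
by case: insub => // z; apply: (subsetP SU).
Qed.

End Aux.

Theorem lemma5p20 (R : realFieldType) (N : finType) (f : {set N} -> R)
    (p : N -> R) (s : N) (gamma : R) :
  (forall S : {set N}, 0 <= f S) ->
  submodular f ->
  (forall x : N, 0 < p x) ->
  0 < gamma < 1 ->
  submodular (@fstar R N f s gamma).
Proof.
move=> _ sf _ /andP[g0 g1].
pose c (S : {set split_ground s}) : R :=
  gamma * (sigma1 s \in S)%:R + (1 - gamma) * (sigma2 s \in S)%:R.
have fE S : fstar f gamma S =
   f (hat S) + c S * (f (hat S :|: [set s]) - f (hat S)).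
  by rewrite /fstar /c; ring.
have c01 S : 0 <= c S <= 1.
  by rewrite /c; case: (sigma1 s \in S); case: (sigma2 s \in S) => /=;
    apply/andP; split; lra.
have cmono (S U : {set split_ground s}) : S \subset U -> c S <= c U.
  move=> SU; rewrite /c.
  have h1 := subsetP SU (sigma1 s); have h2 := subsetP SU (sigma2 s).
  move: h1 h2; case: (sigma1 s \in S); case: (sigma2 s \in S);
  case: (sigma1 s \in U); case: (sigma2 s \in U) => /= h1 h2;
  (try by have := h1 erefl); (try by have := h2 erefl); lra.
have nsU (U : {set split_ground s}) : s \notin hat U by rewrite s_notin_hat.
move=> S U u SU uU.
have AB := hat_sub SU.
case: u uU => [x|b] uU.
- have cS : c (S :|: [set inl x]) = c S.
    by rewrite /c /sigma1 /sigma2 !in_setU !in_set1 /= !orbF.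
  have cU : c (U :|: [set inl x]) = c U.
    by rewrite /c /sigma1 /sigma2 !in_setU !in_set1 /= !orbF.
  rewrite !fE cS cU !hat_inl.
  set A := hat S; set B := hat U.
  have xB : val x \notin B by rewrite /B mem_hat_val.
  have xs : val x != s := valP x.
  have xBs : val x \notin B :|: [set s].
    by rewrite in_setU in_set1 negb_or xB xs.
  have xAs : val x \notin A :|: [set s].
    by rewrite in_setU in_set1 negb_or xs andbT; apply: contra xB; apply: (subsetP AB).
  have h1 := sf _ _ (val x) AB xB.
  have h2 := sf (A :|: [set s]) (B :|: [set s]) (val x) (setSU _ AB) xBs.
  have h3 := sf A (A :|: [set s]) (val x) (subsetUl _ _) xAs.
  rewrite -!(setUAC _ [set s] [set val x]).
  have := c01 S; have := c01 U; have := cmono _ _ SU.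
  move: h1 h2 h3; set cs := c S; set cu := c U.
  set a0 := f A; set a1 := f (A :|: [set val x]); set a2 := f (A :|: [set s]);
  set a3 := f (A :|: [set s] :|: [set val x]).
  set b0 := f B; set b1 := f (B :|: [set val x]); set b2 := f (B :|: [set s]);
  set b3 := f (B :|: [set s] :|: [set val x]).
  move=> h1 h2 h3 hc /andP[cu0 cu1] /andP[cs0 cs1].
  have p1 : 0 <= (1 - cu) * ((a1 - a0) - (b1 - b0)) by apply: mulr_ge0; lra.
  have p2 : 0 <= cu * ((a3 - a2) - (b3 - b2)) by apply: mulr_ge0; lra.
  have p3 : 0 <= (cu - cs) * ((a1 - a0) - (a3 - a2)) by apply: mulr_ge0; lra.
  nra.
- rewrite !fE !hat_inr.
  have uS : inr b \notin S by apply: contra uU; apply: (subsetP SU).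
  set A := hat S; set B := hat U.
  have hm := sf A B s AB (nsU U).
  have er (a b' : bool) : (inr a == inr b' :> split_ground s) = (a == b').
    by apply/eqP/eqP => [[]|->].
  have [hgb hpos] : c (U :|: [set inr b]) - c U = c (S :|: [set inr b]) - c S
      /\ 0 <= c (S :|: [set inr b]) - c S.
    rewrite /c !inE /sigma1 /sigma2.
    by case: b uU uS => /negbTE -> /negbTE -> /=; rewrite !er /= !orbF; (split; [ring|lra]).
  clearbody c.
  move: hgb hpos hm; set A1 := f (A :|: [set s]); set A0 := f A.
  set B1 := f (B :|: [set s]); set B0 := f B.
  move: (c (U :|: [set inr b])) (c U) (c (S :|: [set inr b])) (c S) => u1 u0 s1 s0.
  move=> hgb hpos hm.
  have hp : 0 <= (s1 - s0) * ((A1 - A0) - (B1 - B0)) by apply: mulr_ge0; lra.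
  have -> : u1 = u0 + (s1 - s0) by lra.
  rewrite -subr_ge0; apply: (le_trans hp).
  rewrite le_eqVlt; apply/orP; left; apply/eqP; ring.
Qed.
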